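(* Let $f$ be a nonconstant harmonic function on $K$ with $f(p_0)=\alpha$, $f(p_1)=\beta$, $f(p_2)=\gamma$. Then the restrictions of $f$ to all three edges $[p_0,p_1]$, $[p_0,p_2]$, $[p_1,p_2]$ are simultaneously strictly monotone if and only if at least one of the equalities $2\alpha=\beta+\gamma$, $2\beta=\alpha+\gamma$, $2\gamma=\alpha+\beta$ holds.
   Context: Let $p_0,p_1,p_2$ be the vertices of a unit equilateral triangle in $\mathbb{R}^2$, $F_i(x)=(x+p_i)/2$, and $K$ the Sierpinski gasket (the attractor of $F_0,F_1,F_2$). Minimal triangles of the graph $G_m$ are the triangles with vertices $F_w(p_0),F_w(p_1),F_w(p_2)$ for words $w$ of length $m$. A continuous $f:K\to\mathbb{R}$ is harmonic if for every $m\ge0$ and every minimal triangle of $G_m$ with vertices $v_i,v_j,v_k$, the value at the midpoint $v_{ij}$ of $[v_i,v_j]$ is $\frac15(2f(v_i)+2f(v_j)+f(v_k))$; such $f$ is uniquely determined by its values at $p_0,p_1,p_2$. Each edge $[p_i,p_j]$ is a straight segment contained in $K$, and monotonicity of the restriction refers to a linear parametrization of the segment. *)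

(* Defs.v *)
From HB Require Import structures.
From mathcomp Require Import all_boot all_order all_algebra.
From mathcomp Require Import all_classical all_reals all_analysis.
Set Implicit Arguments. Unset Strict Implicit. Unset Printing Implicit Defensive.
Import Order.TTheory GRing.Theory Num.Theory.
Import numFieldNormedType.Exports.
Local Open Scope classical_set_scope.
Local Open Scope ring_scope.

Section SG.
Variable R : realType.

Definition pv (i : 'I_3) : R * R :=
  match val i with
  | 0%N => (0, 0)
  | 1%N => (1, 0)
  | _ => (1 / 2, Num.sqrt 3 / 2)
  end.

Definition Fmap (i : 'I_3) (x : R * R) : R * R :=
  ((x.1 + (pv i).1) / 2, (x.2 + (pv i).2) / 2).

Definition Fw (w : seq 'I_3) (x : R * R) : R * R := foldr Fmap x w.

Definition midpt (x y : R * R) : R * R := ((x.1 + y.1) / 2, (x.2 + y.2) / 2).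

(* V_* : all vertices of all graphs G_m *)
Definition Vstar : set (R * R) := [set x | exists w i, x = Fw w (pv i)].

(* the Sierpinski gasket: the attractor of F_0,F_1,F_2, i.e. the closure of V_* *)
Definition SG : set (R * R) := closure Vstar.

(* harmonic functions on K (f is only relevant on K) *)
Definition sg_harmonic (f : R * R -> R) : Prop :=
  {within SG, continuous f} /\
  forall (w : seq 'I_3) (i j k : 'I_3), i != j -> j != k -> i != k ->
    f (midpt (Fw w (pv i)) (Fw w (pv j))) =
      (2 * f (Fw w (pv i)) + 2 * f (Fw w (pv j)) + f (Fw w (pv k))) / 5.

Definition seg (i j : 'I_3) (t : R) : R * R :=
  ((pv i).1 + t * ((pv j).1 - (pv i).1), (pv i).2 + t * ((pv j).2 - (pv i).2)).

Definition strictly_monotone_on_edge (f : R * R -> R) (i j : 'I_3) : Prop :=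
  (forall s t, s \in `[0, 1] -> t \in `[0, 1] -> s < t -> f (seg i j s) < f (seg i j t)) \/
  (forall s t, s \in `[0, 1] -> t \in `[0, 1] -> s < t -> f (seg i j t) < f (seg i j s)).

Definition nonconstant_on (A : set (R * R)) (f : R * R -> R) : Prop :=
  exists x y, A x /\ A y /\ f x != f y.

End SG.

Definition i0 : 'I_3 := @Ordinal 3 0 isT.
Definition i1 : 'I_3 := @Ordinal 3 1 isT.
Definition i2 : 'I_3 := @Ordinal 3 2 isT.

(* Main.v *)
Require Import Defs.
From HB Require Import structures.
From mathcomp Require Import all_boot all_order all_algebra.
From mathcomp Require Import all_classical all_reals all_analysis.
From mathcomp Require Import ring lra.
Import Order.TTheory GRing.Theory Num.Theory.
Import numFieldNormedType.Exports.
Local Open Scope ring_scope.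

Section Pts.
Variable R : realType.
Implicit Types (x y : R * R) (w : seq 'I_3).

Lemma Fw_rcons w l x : Fw (rcons w l) x = Fw w (Fmap l x).
Proof. by rewrite /Fw foldr_rcons. Qed.

Lemma Fmap_mid x y l : Fmap l (midpt x y) = midpt (Fmap l x) (Fmap l y).
Proof. rewrite /Fmap /midpt /=; by congr pair; field. Qed.

Lemma Fw_mid w x y : Fw w (midpt x y) = midpt (Fw w x) (Fw w y).
Proof. by elim: w => [//|l w IH] /=; rewrite IH Fmap_mid. Qed.

Lemma Fmap_self (i : 'I_3) : Fmap i (@pv R i) = @pv R i.
Proof. rewrite /Fmap; case: (@pv R i) => a b /=; by congr pair; field. Qed.

Lemma Fmap_pv (i j : 'I_3) : Fmap j (@pv R i) = midpt (@pv R i) (@pv R j).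
Proof. by []. Qed.

Lemma Fw_self n (i : 'I_3) : Fw (nseq n i) (@pv R i) = @pv R i.
Proof. by elim: n => [//|n IH] /=; rewrite IH Fmap_self. Qed.

Lemma nseq_rcons T n (a : T) : nseq n.+1 a = rcons (nseq n a) a.
Proof. by elim: n => //= n <-. Qed.

Lemma seg_mid (i j : 'I_3) s t : midpt (@seg R i j s) (@seg R i j t) = @seg R i j ((s + t) / 2).
Proof. rewrite /midpt /seg /=; by congr pair; field. Qed.

Lemma seg0 (i j : 'I_3) : @seg R i j 0 = pv R i.
Proof. rewrite /seg /=; case: (pv R i) => a b /=; by congr pair; ring. Qed.

Lemma seg1 (i j : 'I_3) : @seg R i j 1 = pv R j.
Proof. rewrite /seg /=; case: (pv R i) (pv R j) => a b [c d] /=; by congr pair; ring. Qed.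

Lemma seg_rev (i j : 'I_3) t : @seg R j i t = @seg R i j (1 - t).
Proof. rewrite /seg /=; case: (pv R i) (pv R j) => a b [c d] /=; by congr pair; ring. Qed.
Lemma escape (S D : R) : (forall n, 0 < 3^+n * S + D) -> 0 <= S.
Proof.
move=> H; rewrite leNgt; apply/negP => S0.
have nS : 0 < - S by rewrite oppr_gt0.
pose n := (Num.trunc (`|D| / (- S))).+1.
have H1 : `|D| / (- S) < n%:R.
  by have /andP[] := truncn_itv (divr_ge0 (normr_ge0 D) (ltW nS)).
have H1' : `|D| < n%:R * (- S) by rewrite -ltr_pdivrMr.
have H2 : n%:R <= (3 : R)^+n.
  by rewrite -natrX ler_nat; apply: ltnW; apply: ltn_expl.
have H3 := H n.
have H4 : D <= `|D| := ler_norm D.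
nra.
Qed.

Section G.
Variable g : R * R -> R.
Hypothesis Hh : forall w (a b c : 'I_3), a != b -> b != c -> a != c ->
  g (midpt (Fw w (pv R a)) (Fw w (pv R b))) =
  (2 * g (Fw w (pv R a)) + 2 * g (Fw w (pv R b)) + g (Fw w (pv R c))) / 5.

Lemma step_val w (a b c : 'I_3) : a != b -> b != c -> a != c ->
  g (Fw (rcons w b) (pv R a)) =
  (2 * g (Fw w (pv R a)) + 2 * g (Fw w (pv R b)) + g (Fw w (pv R c))) / 5.
Proof. by move=> ab bc ac; rewrite Fw_rcons Fmap_pv Fw_mid (Hh w a b c ab bc ac). Qed.

Section Chain.
Variables i j k : 'I_3.
Hypotheses (ij : i != j) (jk : j != k) (ik : i != k).

Let S := (g (pv R i) - g (pv R j)) + (g (pv R k) - g (pv R j)).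
Let D := (g (pv R i) - g (pv R j)) - (g (pv R k) - g (pv R j)).

Lemma chain n :
  2 * 5^+n * (g (Fw (nseq n j) (pv R i)) - g (pv R j)) = 3^+n * S + D /\
  2 * 5^+n * (g (Fw (nseq n j) (pv R k)) - g (pv R j)) = 3^+n * S - D.
Proof.
elim: n => [|n [IH1 IH2]]; first by rewrite /S /D /=; split; ring.
have kj : k != j by rewrite eq_sym.
have ji : j != i by rewrite eq_sym.
have ki : k != i by rewrite eq_sym.
have E1 := step_val (nseq n j) i j k ij jk ik.
have E2 := step_val (nseq n j) k j i kj ji ki.
rewrite nseq_rcons E1 E2 Fw_self.
set a := g (Fw (nseq n j) (pv R i)); set b := g (Fw (nseq n j) (pv R k)).
set x := g (pv R j).
have -> : 2 * 5 ^+ n.+1 * ((2 * a + 2 * x + b) / 5 - x) =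
  2 * (2 * 5^+n * (a - x)) + (2 * 5^+n * (b - x)) by rewrite exprS; field.
have -> : 2 * 5 ^+ n.+1 * ((2 * b + 2 * x + a) / 5 - x) =
  2 * (2 * 5^+n * (b - x)) + (2 * 5^+n * (a - x)) by rewrite exprS; field.
rewrite IH1 IH2 exprS; split; ring.
Qed.

Lemma chain_pt n : Fw (nseq n j) (pv R i) = seg j i (2^+n)^-1.
Proof.
elim: n => [|n IH]; first by rewrite /= expr0 invr1 seg1.
rewrite nseq_rcons Fw_rcons Fmap_pv Fw_mid IH Fw_self -(seg0 j i) seg_mid.
congr seg; rewrite exprS; field; exact: expf_neq0.
Qed.

Lemma chain_sign :
  (forall n, 0 < g (Fw (nseq n j) (pv R i)) - g (pv R j)) \/
  (forall n, g (Fw (nseq n j) (pv R i)) - g (pv R j) < 0) ->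
  (g (pv R j) < g (pv R i) /\ 0 <= (g (pv R i) - g (pv R j)) + (g (pv R k) - g (pv R j))) \/
  (g (pv R i) < g (pv R j) /\ (g (pv R i) - g (pv R j)) + (g (pv R k) - g (pv R j)) <= 0).
Proof.
case=> H.
- left; split; first by have := H 0%N; rewrite /=; lra.
  apply: (@escape _ D) => n.
  have [E _] := chain n; have := H n.
  have : 0 < 2 * 5 ^+ n :> R by rewrite mulr_gt0 // exprn_gt0.
  rewrite -/S; nra.
- right; split; first by have := H 0%N; rewrite /=; lra.
  suff : 0 <= - S by rewrite /S; lra.
  apply: (@escape _ (- D)) => n.
  have [E _] := chain n; have := H n.
  have : 0 < 2 * 5 ^+ n :> R by rewrite mulr_gt0 // exprn_gt0.
  rewrite -/S; nra.
Qed.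
End Chain.

Lemma inv2n_bounds n : 0 < (2 ^+ n : R)^-1 /\ (2 ^+ n : R)^-1 <= 1.
Proof.
have P : 1 <= (2 ^+ n : R) by rewrite exprn_ege1 // ler1n.
have P0 : (2 ^+ n : R) != 0 by rewrite expf_neq0.
have E : (2 ^+ n : R)^-1 * 2 ^+ n = 1 by rewrite mulVf.
have Q : 0 < (2 ^+ n : R)^-1 by rewrite invr_gt0 exprn_gt0.
split => //; nra.
Qed.

Lemma mono_edge (i j k : 'I_3) : i != j -> j != k -> i != k ->
  strictly_monotone_on_edge g i j ->
  ((g (pv R i) < g (pv R j) /\ 0 <= (g (pv R j) - g (pv R i)) + (g (pv R k) - g (pv R i))) \/
   (g (pv R j) < g (pv R i) /\ (g (pv R j) - g (pv R i)) + (g (pv R k) - g (pv R i)) <= 0)) /\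
  ((g (pv R j) < g (pv R i) /\ 0 <= (g (pv R i) - g (pv R j)) + (g (pv R k) - g (pv R j))) \/
   (g (pv R i) < g (pv R j) /\ (g (pv R i) - g (pv R j)) + (g (pv R k) - g (pv R j)) <= 0)).
Proof.
move=> ij jk ik M.
have ji : j != i by rewrite eq_sym.
split.
- apply: (chain_sign j i k ji ik jk).
  have P n : g (Fw (nseq n i) (pv R j)) = g (seg i j (2 ^+ n)^-1) by rewrite chain_pt.
  have I0 : (0 : R) \in `[0, 1] by rewrite in_itv /= ler01 lexx.
  have I n : (2 ^+ n : R)^-1 \in `[0, 1].
    by have [a b] := inv2n_bounds n; rewrite in_itv /= b (ltW a).
  case: M => M; [left|right] => n; rewrite P;
    have := M 0 _ I0 (I n) (proj1 (inv2n_bounds n)); rewrite seg0; lra.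
- apply: (chain_sign i j k ij jk ik).
  have P n : g (Fw (nseq n j) (pv R i)) = g (seg i j (1 - (2 ^+ n)^-1)) by rewrite chain_pt seg_rev.
  have I1 : (1 : R) \in `[0, 1] by rewrite in_itv /= ler01 lexx.
  have I n : 1 - (2 ^+ n : R)^-1 \in `[0, 1].
    by have [a b] := inv2n_bounds n; rewrite in_itv /=; apply/andP; split; lra.
  have L n : 1 - (2 ^+ n : R)^-1 < 1 by have [a b] := inv2n_bounds n; lra.
  case: M => M; [right|left] => n; rewrite P;
    have := M _ 1 (I n) I1 (L n); rewrite seg1; lra.
Qed.
End G.
End Pts.

Section Real.
Variable R : realType.

Definition dy (n m : nat) : R := m%:R / 2 ^+ n.
Definition dyad (t : R) := exists n m, (m <= 2 ^ n)%N /\ t = dy n m.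

Lemma dy_dense {a} b : 0 <= a -> a < b -> b <= 1 -> exists t, dyad t /\ a < t /\ t <= b.
Proof.
move=> a0 ab b1.
have ba : 0 < b - a by lra.
pose n := (Num.trunc ((b - a)^-1)).+1.
have H1 : (b - a)^-1 < n%:R.
  have ib : 0 < (b - a)^-1 by rewrite invr_gt0.
  by have /andP[] := truncn_itv (ltW ib).
have H2 : n%:R <= (2 : R)^+n.
  by rewrite -natrX ler_nat; apply: ltnW; apply: ltn_expl.
have P : 0 < (2 : R) ^+ n by rewrite exprn_gt0.
have Hinv : 1 < (b - a) * 2 ^+ n.
  have : (b - a)^-1 < 2 ^+ n by lra.
  have E : (b - a) * (b - a)^-1 = 1 by rewrite mulfV // gt_eqF.
  nra.
have a2 : 0 <= a * 2 ^+ n by rewrite mulr_ge0 // ltW.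
pose m := (Num.trunc (a * 2 ^+ n)).+1.
have /andP[M1 M2] := truncn_itv a2.
have Mn : m%:R = (Num.trunc (a * 2 ^+ n))%:R + 1 :> R by rewrite /m -addn1 natrD.
have Mlt : m%:R < b * 2 ^+ n by nra.
exists (dy n m); split; last split.
- exists n, m; split => //.
  suff : (m%:R : R) <= (2 ^ n)%:R by rewrite ler_nat.
  rewrite natrX; apply: ltW; apply: (lt_le_trans Mlt).
  nra.
- by rewrite /dy ltr_pdivlMr.
- by rewrite /dy ler_pdivrMr // ltW // -Mn.
Qed.

Lemma dyad1 : dyad 1.
Proof. by exists 0%N, 1%N; split => //; rewrite /dy expr0 divr1. Qed.

Lemma dy_dense2 (s r : R) : 0 <= s -> s <= 1 -> 0 < r -> exists t, dyad t /\ `|t - s| < r.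
Proof.
move=> s0 s1 r0.
have [s1'|s1'] := ltP s 1.
- have h1 : s < Order.min 1 (s + r / 2) by rewrite lt_min s1' /=; lra.
  have h2 : Order.min 1 (s + r / 2) <= 1 by rewrite ge_min lexx.
  have [t [Dt [st tb]]] := dy_dense (Order.min 1 (s + r / 2)) s0 h1 h2.
  exists t; split => //; move: tb; rewrite le_min => /andP[_ h].
  rewrite ger0_norm; lra.
- exists 1; split; first exact: dyad1.
  have -> : s = 1 by lra.
  by rewrite subrr normr0.
Qed.

Lemma dy_real_mono (h : R -> R) :
  (forall t1 t2, dyad t1 -> dyad t2 -> t1 < t2 -> h t1 < h t2) ->
  (forall s, 0 <= s -> s <= 1 -> forall e, 0 < e ->
     exists2 r, 0 < r & forall t, dyad t -> `|t - s| < r -> `|h s - h t| < e) ->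
  forall s t, 0 <= s -> s < t -> t <= 1 -> h s < h t.
Proof.
move=> GM HC s t s0 st t1.
have [e1 [D1 [se1 e1b]]] := dy_dense ((s + t) / 2) s0 ltac:(lra) ltac:(lra).
have [e2 [D2 [e12 e2b]]] := @dy_dense e1 ((e1 + t) / 2) ltac:(lra) ltac:(lra) ltac:(lra).
have G := GM _ _ D1 D2 e12.
pose eps := (h e2 - h e1) / 2.
have eps0 : 0 < eps by rewrite /eps; lra.
have [rs rs0 Hs] := HC s s0 ltac:(lra) eps eps0.
have [rt rt0 Ht] := HC t ltac:(lra) t1 eps eps0.
have [d1 [Dd1 [sd1 d1b]]] := dy_dense (Order.min e1 (s + rs / 2)) s0
   ltac:(rewrite lt_min; apply/andP; split; lra) ltac:(rewrite ge_min; apply/orP; left; lra).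
move: d1b; rewrite le_min => /andP[d1e1 d1s].
have [d2 [Dd2 [d2a d2t]]] := @dy_dense (Order.max e2 (t - rt / 2)) t
   ltac:(rewrite le_max; apply/orP; left; lra) ltac:(rewrite gt_max; apply/andP; split; lra) t1.
move: d2a; rewrite gt_max => /andP[e2d2 td2].
have H1 : h d1 <= h e1.
  move: d1e1; rewrite le_eqVlt => /orP[/eqP -> //|l].
  exact/ltW/GM.
have H2 : h e2 < h d2 := GM _ _ D2 Dd2 e2d2.
have := Hs d1 Dd1 ltac:(rewrite ger0_norm; lra).
have := Ht d2 Dd2 ltac:(rewrite ler0_norm; lra).
rewrite !ltr_norml /eps; lra.
Qed.
End Real.

Section Topo.
Local Open Scope classical_set_scope.
Lemma cont_eps (R: realType) (A : set (R*R)) (f : R*R -> R) x :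
  {within A, continuous f} -> A x -> forall e : R, 0<e ->
  exists2 d : R, 0 < d & forall y, A y -> `|x.1 - y.1| < d -> `|x.2 - y.2| < d -> `|f x - f y| < e.
Proof.
move=> /subspace_continuousP H Ax e e0.
have := H x Ax.
move/cvgrPdist_lt => /(_ e e0).
move=> /nbhs_ballP [d /= d0 Hd].
exists d => // y Ay h1 h2.
apply: (Hd y) => //.
Qed.

Lemma clos_eps (R: realType) (A : set (R*R)) x :
  (forall d : R, 0 < d -> exists y, A y /\ `|x.1 - y.1| < d /\ `|x.2 - y.2| < d) ->
  closure A x.
Proof.
move=> H B /nbhs_ballP [d /= d0 Hd].
have [y [Ay [h1 h2]]] := H d d0.
exists y; split => //; apply: Hd.
split => /=; rewrite -ball_normE /ball_ /=; by [].
Qed.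

End Topo.

Section Grid.
Variable R : realType.

Definition Good (x y z : R) :=
  x < y /\ 2 * z - x - y <= 3 * (y - x) /\ - (3 * (y - x)) <= 2 * z - x - y.

Lemma goodL x y z : Good x y z -> Good x ((2 * y + 2 * x + z) / 5) ((2 * z + 2 * x + y) / 5).
Proof. rewrite /Good; lra. Qed.

Lemma goodR x y z : Good x y z -> Good ((2 * x + 2 * y + z) / 5) y ((2 * z + 2 * y + x) / 5).
Proof. rewrite /Good; lra. Qed.

Lemma dyE0 n q : dy R n.+1 (q.*2) = dy R n q.
Proof. rewrite /dy exprS -muln2 natrM; field; exact: expf_neq0. Qed.

Lemma dyE1 n q : dy R n.+1 (q.*2.+1) = (dy R n q + dy R n q.+1) / 2.
Proof. rewrite /dy exprS -muln2 !mulrS natrM; field; exact: expf_neq0. Qed.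

Lemma dyE2 n q : dy R n.+1 (q.*2.+2) = dy R n q.+1.
Proof. rewrite /dy exprS -muln2 !mulrS natrM; field; exact: expf_neq0. Qed.

Variable g : R * R -> R.
Hypothesis Hh : forall w (a b c : 'I_3), a != b -> b != c -> a != c ->
  g (midpt (Fw w (pv R a)) (Fw w (pv R b))) =
  (2 * g (Fw w (pv R a)) + 2 * g (Fw w (pv R b)) + g (Fw w (pv R c))) / 5.
Variables i j k : 'I_3.
Hypotheses (ij : i != j) (jk : j != k) (ik : i != k).
Hypothesis G0 : Good (g (pv R i)) (g (pv R j)) (g (pv R k)).

Lemma grid n : forall m, (m < 2 ^ n)%N -> exists w,
  Fw w (pv R i) = seg i j (dy R n m) /\ Fw w (pv R j) = seg i j (dy R n m.+1) /\
  Good (g (Fw w (pv R i))) (g (Fw w (pv R j))) (g (Fw w (pv R k))).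
Proof.
have ji : j != i by rewrite eq_sym.
have kj : k != j by rewrite eq_sym.
have ki : k != i by rewrite eq_sym.
elim: n => [|n IH] m.
  rewrite expn0 ltnS leqn0 => /eqP ->; exists [::].
  have -> : dy R 0 0 = 0 by rewrite /dy expr0 divr1.
  have -> : dy R 0 1 = 1 by rewrite /dy expr0 divr1.
  by rewrite /= seg0 seg1.
move=> Hm.
have Hq : (m./2 < 2 ^ n)%N by rewrite ltn_half_double -mul2n -expnS.
have [w [E1 [E2 Gw]]] := IH _ Hq.
have Hm' := odd_double_half m.
move: E1 E2 Hq; set q := m./2 => E1 E2 Hq.
case: (odd m) Hm' => /= Hm'; rewrite -Hm'.
- have P1 : Fw (rcons w j) (pv R i) = seg i j (dy R n.+1 q.*2.+1).
    by rewrite Fw_rcons Fmap_pv Fw_mid E1 E2 seg_mid dyE1.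
  have P2 : Fw (rcons w j) (pv R j) = seg i j (dy R n.+1 q.*2.+2).
    by rewrite Fw_rcons Fmap_self E2 dyE2.
  have V1 := @step_val R g Hh w i j k ij jk ik.
  have V2 : g (Fw (rcons w j) (pv R j)) = g (Fw w (pv R j)) by rewrite Fw_rcons Fmap_self.
  have V3 := @step_val R g Hh w k j i kj ji ki.
  exists (rcons w j); split => //; split => //.
  rewrite V1 V2 V3; exact: goodR.
- have P1 : Fw (rcons w i) (pv R i) = seg i j (dy R n.+1 q.*2).
    by rewrite Fw_rcons Fmap_self E1 dyE0.
  have P2 : Fw (rcons w i) (pv R j) = seg i j (dy R n.+1 q.*2.+1).
    by rewrite Fw_rcons Fmap_pv Fw_mid E1 E2 seg_mid dyE1 addrC.
  have V1 : g (Fw (rcons w i) (pv R i)) = g (Fw w (pv R i)) by rewrite Fw_rcons Fmap_self.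
  have V2 := @step_val R g Hh w j i k ji ik jk.
  have V3 := @step_val R g Hh w k i j ki ij kj.
  exists (rcons w i); rewrite add0n; split => //; split => //.
  rewrite V1 V2 V3; exact: goodL.
Qed.

Lemma grid_lt n m : (m < 2 ^ n)%N -> g (seg i j (dy R n m)) < g (seg i j (dy R n m.+1)).
Proof. by move=> H; have [w [E1 [E2 [G _]]]] := grid _ _ H; rewrite -E1 -E2. Qed.

Lemma grid_V n m : (m <= 2 ^ n)%N -> @Vstar R (seg i j (dy R n m)).
Proof.
rewrite leq_eqVlt => /orP [/eqP ->|H].
  have -> : dy R n (2 ^ n) = 1 by rewrite /dy natrX divff // expf_neq0.
  by exists [::], j; rewrite seg1.
by have [w [E1 _]] := grid _ _ H; exists w, i.
Qed.

Lemma grid_mono n m1 m2 : (m1 < m2)%N -> (m2 <= 2 ^ n)%N ->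
  g (seg i j (dy R n m1)) < g (seg i j (dy R n m2)).
Proof.
elim: m2 => // m2 IH; rewrite ltnS leq_eqVlt => /orP [/eqP ->|lt] le.
  exact: grid_lt.
apply: lt_trans (IH lt (ltnW le)) _; exact: grid_lt.
Qed.

Lemma dy_lt N a b : dy R N a < dy R N b -> (a < b)%N.
Proof.
by rewrite /dy ltr_pM2r ?invr_gt0 ?exprn_gt0 // ltr_nat.
Qed.

Lemma GM t1 t2 : dyad R t1 -> dyad R t2 -> t1 < t2 -> g (seg i j t1) < g (seg i j t2).
Proof.
move=> [n1 [m1 [H1 ->]]] [n2 [m2 [H2 ->]]].
have e1 : dy R n1 m1 = dy R (n1 + n2) (m1 * 2 ^ n2).
  rewrite /dy natrM natrX exprD; field; by rewrite !expf_neq0.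
have e2 : dy R n2 m2 = dy R (n1 + n2) (m2 * 2 ^ n1).
  rewrite /dy natrM natrX exprD; field; by rewrite !expf_neq0.
rewrite e1 e2 => /dy_lt lt; apply: grid_mono lt _.
by rewrite expnD mulnC leq_mul.
Qed.

Hypothesis Hc : forall x, @SG R x -> forall e, 0 < e -> exists2 d, 0 < d &
  forall y, @SG R y -> `|x.1 - y.1| < d -> `|x.2 - y.2| < d -> `|g x - g y| < e.

Let C := 1 + `|(pv R j).1 - (pv R i).1| + `|(pv R j).2 - (pv R i).2|.
Let C0 : 0 < C.
Proof. by rewrite /C; have := normr_ge0 ((pv R j).1 - (pv R i).1);
  have := normr_ge0 ((pv R j).2 - (pv R i).2); lra. Qed.

Lemma seg_close s t d : `|s - t| < d / C ->
  `|(seg i j s).1 - (seg i j t).1| < d /\ `|(seg i j s).2 - (seg i j t).2| < d.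
Proof.
move=> H.
have H' : `|s - t| * C < d by rewrite -ltr_pdivlMr // C0.
have A1 := normr_ge0 ((pv R j).1 - (pv R i).1).
have A2 := normr_ge0 ((pv R j).2 - (pv R i).2).
have B := normr_ge0 (s - t).
rewrite /seg /=.
have -> : (pv R i).1 + s * ((pv R j).1 - (pv R i).1) - ((pv R i).1 + t * ((pv R j).1 - (pv R i).1))
  = (s - t) * ((pv R j).1 - (pv R i).1) by ring.
have -> : (pv R i).2 + s * ((pv R j).2 - (pv R i).2) - ((pv R i).2 + t * ((pv R j).2 - (pv R i).2))
  = (s - t) * ((pv R j).2 - (pv R i).2) by ring.
rewrite !normrM; move: H'; rewrite /C; split; nra.
Qed.

Lemma dyad_SG t : dyad R t -> @SG R (seg i j t).
Proof.
move=> [n [m [H ->]]]; apply: subset_closure; exact: grid_V.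
Qed.

Lemma seg_SG s : 0 <= s -> s <= 1 -> @SG R (seg i j s).
Proof.
move=> s0 s1; apply: clos_eps => d d0.
have [t [Dt Ht]] := @dy_dense2 R s (d / C) s0 s1 (divr_gt0 d0 C0).
exists (seg i j t); split.
  by move: Dt => [n [m [H ->]]]; exact: grid_V.
apply: seg_close; by rewrite distrC.
Qed.

Lemma edge_inc s t : 0 <= s -> s < t -> t <= 1 -> g (seg i j s) < g (seg i j t).
Proof.
move=> s0 st t1.
apply: (@dy_real_mono R (fun t => g (seg i j t)) _ _ s t s0 st t1); first exact: GM.
move=> s' s0' s1' e e0.
have [d d0 Hd] := Hc _ (seg_SG _ s0' s1') _ e0.
exists (d / C); first by rewrite divr_gt0 // C0.
move=> t' Dt Ht.
have [h1 h2] := @seg_close s' t' d ltac:(by rewrite distrC).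
exact: Hd _ (dyad_SG _ Dt) h1 h2.
Qed.
End Grid.

Lemma third : forall i l : 'I_3, i != l -> exists k, (i != k) && (l != k).
Proof.
move=> [[|[|[|//]]] Hi] [[|[|[|//]]] Hl] //= _.
- by exists i2.
- by exists i1.
- by exists i2.
- by exists i0.
- by exists i1.
- by exists i0.
Qed.

Section Final.
Local Open Scope classical_set_scope.
Variable R : realType.
Variable f : R * R -> R.
Hypothesis Hf : sg_harmonic f.

Let Hh := proj2 Hf.
Let Hc := @cont_eps R (@SG R) f ^~ (proj1 Hf).

Let Hh' : forall w (a b c : 'I_3), a != b -> b != c -> a != c ->
  (fun x => - f x) (midpt (Fw w (pv R a)) (Fw w (pv R b))) =
  (2 * (fun x => - f x) (Fw w (pv R a)) + 2 * (fun x => - f x) (Fw w (pv R b))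
     + (fun x => - f x) (Fw w (pv R c))) / 5.
Proof. by move=> w a b c ab bc ac /=; rewrite (Hh w a b c ab bc ac); field. Qed.

Let Hc' : forall x, @SG R x -> forall e, 0 < e -> exists2 d, 0 < d &
  forall y, @SG R y -> `|x.1 - y.1| < d -> `|x.2 - y.2| < d -> `|- f x - - f y| < e.
Proof.
move=> x Sx e e0; have [d d0 H] := Hc x Sx e e0; exists d => // y Sy h1 h2.
have -> : - f x - - f y = - (f x - f y) by ring.
by rewrite normrN; apply: H.
Qed.

Lemma edge_ok (i j k : 'I_3) : i != j -> j != k -> i != k ->
  Good R (f (pv R i)) (f (pv R j)) (f (pv R k)) \/
  Good R (- f (pv R i)) (- f (pv R j)) (- f (pv R k)) ->
  strictly_monotone_on_edge f i j.
Proof.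
move=> ij jk ik [G|G]; [left|right] => s t; rewrite !in_itv /= => /andP[s0 s1] /andP[t0 t1] st.
- exact: (@edge_inc R f Hh i j k ij jk ik G Hc s t s0 st t1).
- have := @edge_inc R (fun x => - f x) Hh' i j k ij jk ik G Hc' s t s0 st t1.
  rewrite /=; lra.
Qed.

Lemma allconst : f (pv R i0) = f (pv R i1) -> f (pv R i0) = f (pv R i2) ->
  forall y, @SG R y -> f y = f (pv R i0).
Proof.
move=> e1 e2.
set a := f (pv R i0) in e1 e2 *.
have V : forall w l, f (Fw w (pv R l)) = a.
  elim/last_ind => [|w x IH] l.
    by case: l => [[|[|[|//]]] Hl] /=; [rewrite /a | rewrite e1 | rewrite e2].
  have [/eqP ->|xl] := boolP (x == l); first by rewrite Fw_rcons Fmap_self IH.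
  have lx : l != x by rewrite eq_sym.
  have [k /andP[lk xk]] := third _ _ lx.
  rewrite (@step_val R f Hh w l x k lx xk lk) !IH; by field.
move=> y Sy.
apply/eqP; apply/negPn/negP => ne.
have e0 : 0 < `|f y - a| by rewrite normr_gt0 subr_eq0.
have [d d0 Hd] := Hc y Sy _ e0.
have [z [[w [l ->]] Bz]] := Sy [set z | `|y.1 - z.1| < d /\ `|y.2 - z.2| < d]
  ltac:(apply/nbhs_ballP; exists d => // z [h1 h2]; move: h1 h2;
        rewrite -!ball_normE /ball_ /= => h1 h2; by split).
move: Bz => [h1 h2].
have := Hd _ (subset_closure (ex_intro _ w (ex_intro _ l erefl))) h1 h2.
by rewrite V ltxx.
Qed.
End Final.

Lemma edge_ok' (R : realType) (f : R * R -> R) (i j k : 'I_3) :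
  sg_harmonic f -> i != j -> j != k -> i != k ->
  f (pv R i) <> f (pv R j) ->
  (f (pv R i) < f (pv R j) -> 2 * f (pv R k) - f (pv R i) - f (pv R j) <= 3 * (f (pv R j) - f (pv R i))
     /\ - (3 * (f (pv R j) - f (pv R i))) <= 2 * f (pv R k) - f (pv R i) - f (pv R j)) ->
  (f (pv R j) < f (pv R i) -> 2 * f (pv R k) - f (pv R i) - f (pv R j) <= 3 * (f (pv R i) - f (pv R j))
     /\ - (3 * (f (pv R i) - f (pv R j))) <= 2 * f (pv R k) - f (pv R i) - f (pv R j)) ->
  strictly_monotone_on_edge f i j.
Proof.
move=> Hf ij jk ik ne N1 N2.
apply: (@edge_ok R f Hf i j k ij jk ik).
have [lt|gt|eq] := ltgtP (f (pv R i)) (f (pv R j)).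
- left; have := N1 lt; rewrite /Good; lra.
- right; have := N2 gt; rewrite /Good; lra.
- by exfalso; apply: ne.
Qed.

Theorem theorem4 (R : realType) (f : R * R -> R) :
  sg_harmonic f -> nonconstant_on (@SG R) f ->
  ((strictly_monotone_on_edge f i0 i1 /\ strictly_monotone_on_edge f i0 i2 /\
    strictly_monotone_on_edge f i1 i2) <->
   (2 * f (@pv R i0) = f (@pv R i1) + f (@pv R i2) \/
    2 * f (@pv R i1) = f (@pv R i0) + f (@pv R i2) \/
    2 * f (@pv R i2) = f (@pv R i0) + f (@pv R i1))).
Proof.
move=> Hf [x [y [Sx [Sy nxy]]]].
have Hh := proj2 Hf.
split.
- move=> [M01 [M02 M12]].
  have [A1 A2] := @mono_edge R f Hh i0 i1 i2 isT isT isT M01.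
  have [B1 B2] := @mono_edge R f Hh i0 i2 i1 isT isT isT M02.
  have [C1 C2] := @mono_edge R f Hh i1 i2 i0 isT isT isT M12.
  move: A1 A2 B1 B2 C1 C2.
  set a := f (pv R i0); set b := f (pv R i1); set c := f (pv R i2) => A1 A2 B1 B2 C1 C2.
  have [hab|hab|hab] := ltgtP a b; have [hac|hac|hac] := ltgtP a c;
    have [hbc|hbc|hbc] := ltgtP b c;
    first [ left; lra | right; left; lra | right; right; lra | exfalso; lra ].
- move=> H.
  have NC : f (pv R i0) <> f (pv R i1) \/ f (pv R i0) <> f (pv R i2).
    case: (eqVneq (f (pv R i0)) (f (pv R i1))) => [e1|/eqP]; last by left.
    case: (eqVneq (f (pv R i0)) (f (pv R i2))) => [e2|/eqP]; last by right.
    exfalso; move/negP: nxy; apply; apply/eqP.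
    by rewrite (@allconst R f Hf e1 e2 x Sx) (@allconst R f Hf e1 e2 y Sy).
  move: H NC.
  set a := f (pv R i0); set b := f (pv R i1); set c := f (pv R i2) => H NC.
  have [hab|hab|hab] := ltgtP a b; have [hac|hac|hac] := ltgtP a c;
    have [hbc|hbc|hbc] := ltgtP b c;
    try (exfalso; lra);
    (split; [apply: (@edge_ok' R f i0 i1 i2 Hf) | split;
       [apply: (@edge_ok' R f i0 i2 i1 Hf) | apply: (@edge_ok' R f i1 i2 i0 Hf)]] => //;
      rewrite -/a -/b -/c; lra).
Qed.
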